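(* Let $\xi:[0,\ell)\to\mathbb{R}^n$ be a self-contracted curve and $\tau\in[0,\ell)$. Let $$\Delta:=\Big\{\tfrac{\xi(t)-\xi(\tau)}{\|\xi(t)-\xi(\tau)\|}\ :\ t\in(\tau,\ell),\ \xi(t)\ne\xi(\tau)\Big\}\subset\mathbb{S}^{n-1},$$ and let $\bar v_\tau\in\mathbb{S}^{n-1}$ be any vector with $\angle(\bar v_\tau,w)\le\theta_n$ for all $w\in\Delta$, where $\theta_n=\arccos((2\cdot3^n)^{-1})$ (such a vector exists). Put $\varepsilon_n:=(\cos\theta_n)/3=(2\cdot3^{n+1})^{-1}$. Then for every $T\in(\tau,\ell)$ and every $v\in\mathbb{S}^{n-1}$ with $\|v-\bar v_\tau\|\le\varepsilon_n$, $$\big|\Pi_v(\Xi(T))\big|\le\big|\Pi_v(\Xi(\tau))\big|-\varepsilon_n\|\xi(T)-\xi(\tau)\|$$ (with the convention that the inequality is trivially true if $|\Pi_v(\Xi(\tau))|=\infty$).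
   Context: Let $(X,d)$ be a metric space and $\ell\in(0,\infty]$. A map $\xi:[0,\ell)\to X$ (not necessarily continuous) is called self-contracted if $d(\xi(t_2),\xi(t_3))\le d(\xi(t_1),\xi(t_3))$ for all $0\le t_1\le t_2\le t_3<\ell$. For $t\in[0,\ell)$, $\Xi(t):=\xi([t,\ell))$. Here $X=\mathbb{R}^n$ with Euclidean norm $\|\cdot\|$, inner product $\langle\cdot,\cdot\rangle$; $\mathbb{S}^{n-1}$ is the unit sphere and $\angle$ the Euclidean angle. For $v\in\mathbb{S}^{n-1}$ and $\Omega\subset\mathbb{R}^n$, $\Pi_v(\Omega)\subset\mathbb{R}$ is the closed convex hull (smallest closed interval) containing $\{\langle x,v\rangle: x\in\Omega\}$, and $|\cdot|$ denotes one-dimensional Lebesgue measure. *)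

(* Defs.v *)
From Stdlib Require Import Reals Lra.
Open Scope R_scope.

(* Points of R^n are represented as functions nat -> R, of which only the
   coordinates 0..n-1 are relevant. *)
Definition vec := nat -> R.

Fixpoint rsum (n : nat) (f : nat -> R) : R :=
  match n with O => 0 | S m => rsum m f + f m end.

Definition inner (n : nat) (x y : vec) : R := rsum n (fun i => x i * y i).
Definition vnorm (n : nat) (x : vec) : R := sqrt (inner n x x).
Definition vsub (x y : vec) : vec := fun i => x i - y i.
Definition vscale (c : R) (x : vec) : vec := fun i => c * x i.

Definition vec_eq (n : nat) (x y : vec) : Prop := forall i, (i < n)%nat -> x i = y i.

Definition unit_sphere (n : nat) (v : vec) : Prop := vnorm n v = 1.

Definition angle (n : nat) (v w : vec) : R := acos (inner n v w / (vnorm n v * vnorm n w)).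

(* The parameter ell in (0, +oo]: None stands for +oo. *)
Definition in_dom (ell : option R) (t : R) : Prop :=
  0 <= t /\ match ell with Some l => t < l | None => True end.

Definition self_contracted (n : nat) (ell : option R) (xi : R -> vec) : Prop :=
  forall t1 t2 t3, in_dom ell t1 -> in_dom ell t3 -> t1 <= t2 -> t2 <= t3 ->
    vnorm n (vsub (xi t2) (xi t3)) <= vnorm n (vsub (xi t1) (xi t3)).

Definition Xi (ell : option R) (xi : R -> vec) (t : R) : vec -> Prop :=
  fun x => exists s, t <= s /\ in_dom ell s /\ x = xi s.

Definition DeltaSet (n : nat) (ell : option R) (xi : R -> vec) (tau : R) : vec -> Prop :=
  fun w => exists t, tau < t /\ in_dom ell t /\ ~ vec_eq n (xi t) (xi tau) /\
    w = vscale (/ vnorm n (vsub (xi t) (xi tau))) (vsub (xi t) (xi tau)).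

Definition theta (n : nat) : R := acos (/ (2 * 3 ^ n)).
Definition eps (n : nat) : R := cos (theta n) / 3.

Definition proj_set (n : nat) (v : vec) (Omega : vec -> Prop) : R -> Prop :=
  fun r => exists x, Omega x /\ r = inner n x v.

Definition is_glb (E : R -> Prop) (m : R) : Prop :=
  (forall x, E x -> m <= x) /\ (forall b, (forall x, E x -> b <= x) -> b <= m).

(* proj_length n v Omega L : the closed convex hull Pi_v(Omega) of the
   projections is a bounded interval [inf, sup] of Lebesgue measure L
   (finite). If Pi_v(Omega) is unbounded (measure +oo), no L satisfies it. *)
Definition proj_length (n : nat) (v : vec) (Omega : vec -> Prop) (L : R) : Prop :=
  exists s i, is_lub (proj_set n v Omega) s /\ is_glb (proj_set n v Omega) i /\ L = s - i.

(* Main.v *)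
Require Import Defs.
From Stdlib Require Import Reals Lra Psatz FunctionalExtensionality.
Open Scope R_scope.

Lemma rsum_ext n f g : (forall i, (i < n)%nat -> f i = g i) -> rsum n f = rsum n g.
Proof. induction n; simpl; intros H; auto. rewrite IHn by (intros; apply H; lia). rewrite H by lia; auto. Qed.

Lemma rsum_plus n f g : rsum n (fun i => f i + g i) = rsum n f + rsum n g.
Proof. induction n; simpl; [lra|]. rewrite IHn; lra. Qed.

Lemma rsum_scal n c f : rsum n (fun i => c * f i) = c * rsum n f.
Proof. induction n; simpl; [lra|]. rewrite IHn; lra. Qed.

Lemma rsum_nonneg n f : (forall i, (i < n)%nat -> 0 <= f i) -> 0 <= rsum n f.
Proof. induction n; simpl; intros H; [lra|]. assert (0 <= rsum n f) by (apply IHn; intros; apply H; lia).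
 assert (0 <= f n) by (apply H; lia). lra. Qed.

Lemma inner_sym n x y : inner n x y = inner n y x.
Proof. unfold inner. apply rsum_ext. intros; lra. Qed.

Lemma inner_pos n x : 0 <= inner n x x.
Proof. unfold inner. apply rsum_nonneg. intros; nra. Qed.

Lemma inner_lin n a b x y z : (forall i, (i < n)%nat -> z i = a * x i + b * y i) ->
  forall w, inner n z w = a * inner n x w + b * inner n y w.
Proof. intros H w. unfold inner. rewrite <- !rsum_scal, <- rsum_plus. apply rsum_ext.
 intros i Hi. rewrite H by auto. lra. Qed.

Lemma inner_zero n x y : (forall i, (i < n)%nat -> x i = 0) -> inner n x y = 0.
Proof. intros H. unfold inner. rewrite (rsum_ext n _ (fun i => 0 * y i)).
 rewrite rsum_scal; lra. intros; rewrite H; auto. Qed.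

Lemma inner_xx0 n x : inner n x x = 0 -> forall i, (i < n)%nat -> x i = 0.
Proof. induction n; simpl; intros H i Hi; [lia|]. unfold inner in H; simpl in H.
 assert (0 <= rsum n (fun i => x i * x i)) by (apply rsum_nonneg; intros; nra).
 assert (x n * x n = 0) by nra.
 destruct (Nat.eq_dec i n). subst; nra. apply IHn; [unfold inner; nra|lia]. Qed.

Lemma CS2 n x y : (inner n x y)^2 <= inner n x x * inner n y y.
Proof.
 set (a := inner n y y). set (b := inner n x y).
 assert (Ha := inner_pos n y). fold a in Ha.
 destruct (Req_dec a 0) as [H0|H0].
 - assert (b = 0). { unfold b. rewrite inner_sym. apply inner_zero. apply inner_xx0; auto. }
   rewrite H, H0. nra.
 - set (z := fun i => a * x i + (- b) * y i).
   assert (Hz := inner_pos n z).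
   rewrite (inner_lin n a (-b) x y z) in Hz by (intros; reflexivity).
   rewrite (inner_sym n x z), (inner_sym n y z) in Hz.
   rewrite !(inner_lin n a (-b) x y z) in Hz by (intros; reflexivity).
   rewrite (inner_sym n y x) in Hz. fold a b in Hz.
   assert (Hx := inner_pos n x). nra.
Qed.

Lemma vnorm_pos n x : 0 <= vnorm n x.
Proof. apply sqrt_pos. Qed.

Lemma vnorm_sq n x : vnorm n x * vnorm n x = inner n x x.
Proof. apply sqrt_sqrt, inner_pos. Qed.

Lemma CS n x y : Rabs (inner n x y) <= vnorm n x * vnorm n y.
Proof.
 assert (H := CS2 n x y). pose proof (vnorm_sq n x). pose proof (vnorm_sq n y).
 pose proof (vnorm_pos n x). pose proof (vnorm_pos n y).
 apply Rsqr_incr_0_var; [|nra]. rewrite <- Rsqr_abs. unfold Rsqr. nra.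
Qed.

Lemma tri n x y z : (forall i, (i < n)%nat -> z i = x i + y i) -> vnorm n z <= vnorm n x + vnorm n y.
Proof.
 intros H. assert (E : forall w, inner n z w = 1 * inner n x w + 1 * inner n y w)
   by (apply inner_lin; intros; rewrite H; auto; lra).
 assert (Ezz : inner n z z = inner n x x + 2 * inner n x y + inner n y y).
 { rewrite E, (inner_sym n x z), (inner_sym n y z), !E. rewrite (inner_sym n y x). lra. }
 pose proof (CS n x y). pose proof (vnorm_sq n x). pose proof (vnorm_sq n y). pose proof (vnorm_sq n z).
 pose proof (vnorm_pos n x). pose proof (vnorm_pos n y). pose proof (vnorm_pos n z).
 pose proof (Rle_abs (inner n x y)).
 apply Rsqr_incr_0_var; unfold Rsqr; nra.
Qed.

Lemma vnorm_scale n c x : vnorm n (vscale c x) = Rabs c * vnorm n x.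
Proof.
 unfold vnorm. rewrite (inner_lin n c 0 x x (vscale c x)) by (intros; unfold vscale; lra).
 rewrite inner_sym, (inner_lin n c 0 x x (vscale c x)) by (intros; unfold vscale; lra).
 replace (c * (c * inner n x x + 0 * inner n x x) + 0 * (c * inner n x x + 0 * inner n x x)) with (Rsqr c * inner n x x) by (unfold Rsqr; lra).
 rewrite sqrt_mult_alt by apply Rle_0_sqr. rewrite sqrt_Rsqr_abs. auto.
Qed.

Lemma abs_bd x b : Rabs x <= b -> -b <= x <= b.
Proof. intros H. pose proof (Rle_abs x). pose proof (Rle_abs (-x)). rewrite Rabs_Ropp in H1. lra. Qed.

Lemma c0_bounds n : 0 < / (2 * 3 ^ n) <= 1/2.
Proof. assert (1 <= 3 ^ n) by (apply pow_R1_Rle; lra). split.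
 apply Rinv_0_lt_compat; lra. apply Rmult_le_reg_l with (2 * 3^n). lra.
 rewrite Rinv_r by lra. lra. Qed.

Lemma eps_val n : eps n = / (2 * 3 ^ n) / 3.
Proof. unfold eps, theta. rewrite cos_acos; auto. pose proof (c0_bounds n); lra. Qed.

Lemma acos_le_inv x y : -1 <= x <= 1 -> -1 <= y <= 1 -> acos x <= acos y -> y <= x.
Proof. intros Hx Hy H. destruct H as [H|H].
 - pose proof (acos_bound x); pose proof (acos_bound y).
   pose proof (cos_decreasing_1 (acos x) (acos y)). rewrite !cos_acos in H2 by auto.
   apply Rlt_le, H2; lra.
 - rewrite <- (cos_acos x), <- (cos_acos y), H by auto. lra. Qed.

Lemma key n ell xi tau vbar v s :
  unit_sphere n vbar ->
  (forall w, DeltaSet n ell xi tau w -> angle n vbar w <= theta n) ->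
  unit_sphere n v -> vnorm n (vsub v vbar) <= eps n ->
  tau < s -> in_dom ell s ->
  2 * eps n * vnorm n (vsub (xi s) (xi tau)) <= inner n (vsub (xi s) (xi tau)) v.
Proof.
 intros Hvb HD Hv Hvv Hs Hds.
 set (a := vsub (xi s) (xi tau)). set (N := vnorm n a).
 pose proof (vnorm_pos n a) as HN. fold N in HN.
 rewrite eps_val in *. pose proof (c0_bounds n) as Hc. set (c0 := / (2 * 3 ^ n)) in *.
 assert (Hcs := CS n a v). fold N in Hcs. rewrite Hv in Hcs.
 destruct HN as [HN|HN].
 2:{ rewrite <- HN in *. apply abs_bd in Hcs. lra. }
 set (w := vscale (/ N) a).
 assert (Hw : DeltaSet n ell xi tau w).
 { exists s. repeat split; auto; try apply Hds; try lra.
   intros E. assert (inner n a a = 0).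
   { apply inner_zero. intros i Hi. unfold a, vsub. rewrite E; auto; lra. }
   unfold N, vnorm in HN. rewrite H in HN. rewrite sqrt_0 in HN. lra. }
 assert (Hwn : vnorm n w = 1).
 { unfold w. rewrite vnorm_scale. fold N. rewrite Rabs_right.
   field; lra. left; apply Rinv_0_lt_compat; auto. }
 assert (Hiw : inner n vbar w = / N * inner n vbar a).
 { rewrite inner_sym, (inner_sym n vbar a). rewrite (inner_lin n (/N) 0 a a w). ring.
   intros; unfold w, vscale; lra. }
 assert (Hcs2 := CS n vbar a). rewrite Hvb in Hcs2. fold N in Hcs2.
 assert (Hr : -1 <= / N * inner n vbar a <= 1).
 { apply abs_bd. rewrite Rabs_mult, Rabs_right.
   apply Rmult_le_reg_l with N; auto. rewrite <- Rmult_assoc, Rinv_r by lra. lra.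
   left; apply Rinv_0_lt_compat; auto. }
 assert (Hang := HD w Hw). unfold angle, theta in Hang.
 rewrite Hvb, Hwn, Hiw, Rmult_1_l, Rdiv_1_r in Hang. fold c0 in Hang.
 apply acos_le_inv in Hang; [|auto|lra].
 assert (Hva : inner n vbar a >= c0 * N).
 { apply Rmult_le_compat_l with (r := N) in Hang; [|lra].
   rewrite <- Rmult_assoc, Rinv_r in Hang by lra. lra. }
 assert (Hsplit : inner n v a = 1 * inner n (vsub v vbar) a + 1 * inner n vbar a).
 { apply inner_lin. intros; unfold vsub; lra. }
 assert (Hcs3 := CS n (vsub v vbar) a). fold N in Hcs3.
 pose proof (vnorm_pos n (vsub v vbar)).
 rewrite inner_sym, Hsplit.
 assert (vnorm n (vsub v vbar) * N <= c0 / 3 * N) by (apply Rmult_le_compat_r; lra).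
 apply abs_bd in Hcs3. lra.
Qed.

Theorem mainTheorem4 (n : nat) (ell : option R) (xi : R -> vec) (tau : R) (vbar : vec) :
  match ell with Some l => 0 < l | None => True end ->
  self_contracted n ell xi ->
  in_dom ell tau ->
  unit_sphere n vbar ->
  (forall w, DeltaSet n ell xi tau w -> angle n vbar w <= theta n) ->
  forall (T : R) (v : vec),
    tau < T -> in_dom ell T ->
    unit_sphere n v ->
    vnorm n (vsub v vbar) <= eps n ->
    forall L0 L1,
      proj_length n v (Xi ell xi tau) L0 ->
      proj_length n v (Xi ell xi T) L1 ->
      L1 <= L0 - eps n * vnorm n (vsub (xi T) (xi tau)).
Proof.
 intros Hl Hsc Htau Hvb HD T v HT HdT Hv Hvv L0 L1 [s0 [i0 [Hs0 [Hi0 E0]]]] [s1 [i1 [Hs1 [Hi1 E1]]]].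
 subst L0 L1.
 assert (Heps : 0 <= eps n) by (rewrite eps_val; pose proof (c0_bounds n); lra).
 set (d := vnorm n (vsub (xi T) (xi tau))).
 assert (A1 : s1 <= s0).
 { apply Hs1. intros x [y [[s [Hs [Hds Ey]]] Ex]]. apply Hs0. exists y. split; auto.
   exists s. split; [lra|split; auto]. }
 assert (A2 : i0 <= inner n (xi tau) v).
 { apply Hi0. exists (xi tau). split; auto. exists tau. split; [lra|split; auto]. }
 assert (A3 : inner n (xi tau) v + eps n * d <= i1).
 { apply Hi1. intros x [y [[s [Hs [Hds Ey]]] Ex]]. subst x y.
   assert (K := key n ell xi tau vbar v s Hvb HD Hv Hvv ltac:(lra) Hds).
   assert (Hin : inner n (vsub (xi s) (xi tau)) v = 1 * inner n (xi s) v + (-1) * inner n (xi tau) v)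
     by (apply inner_lin; intros; unfold vsub; lra).
   assert (Ht : d <= vnorm n (vsub (xi T) (xi s)) + vnorm n (vsub (xi s) (xi tau)))
     by (apply tri; intros; unfold vsub; lra).
   assert (Hc : vnorm n (vsub (xi T) (xi s)) <= vnorm n (vsub (xi tau) (xi s)))
     by (apply Hsc; auto; lra).
   assert (Hsym : vnorm n (vsub (xi tau) (xi s)) = vnorm n (vsub (xi s) (xi tau))).
   { replace (vsub (xi tau) (xi s)) with (vscale (-1) (vsub (xi s) (xi tau))).
     rewrite vnorm_scale. replace (Rabs (-1)) with 1. lra. rewrite Rabs_left; lra.
     unfold vscale, vsub. apply functional_extensionality; intro i; lra. }
   assert (eps n * d <= 2 * eps n * vnorm n (vsub (xi s) (xi tau))).
   { replace (2 * eps n * vnorm n (vsub (xi s) (xi tau))) with (eps n * (2 * vnorm n (vsub (xi s) (xi tau)))) by ring.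
     apply Rmult_le_compat_l; lra. }
   lra. }
 lra.
Qed.
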